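(* Consider the flat-pricing market described in the context and assume $\eta<\big(\kappa_{\mathrm{avg}}\,\Phi_{\max}^{1-\theta}\big)^{-1}$. Treat $\kappa_{\mathrm{avg}}$ and $\kappa_{\mathrm{peak}}$ as independent variable parameters, with all other parameters fixed. (i) In the opt-saturated case (i.e., when $R'(p_0)<0$), as $\kappa_{\mathrm{peak}}$ decreases, the equilibrium price $p^\star$ decreases, so the net-utility $\Phi^\theta-p^\star$ of every subscriber increases, and the equilibrium revenue $R(p^\star)$ increases (more precisely $\partial p^\star/\partial\kappa_{\mathrm{peak}}>0$ and $\partial R(p^\star)/\partial\kappa_{\mathrm{peak}}<0$); consequently the user surplus and the social welfare increase. (ii) In the opt-unsaturated case (i.e., when $R'(p_0)>0$), as $\kappa_{\mathrm{avg}}$ decreases, the equilibrium price decreases, so the net-utility of every subscriber increases, and the maximal revenue $\max_{p\in\mathcal P}R(p)$ increases; consequently the user surplus and the social welfare increase.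
   Context: Market model (single cell). There are $\hat N$ users (treated as a continuum of mass $\hat N$) in one base-station cell with capacity $C_{3g}>0$ (traffic volume per time slot), and time slots $t\in T=\{1,\dots,|T|\}$. Each user's daily traffic demand $\Phi$ is random with density $f_\Phi(x)=x^{-\sigma}/Z$ for $0\le x\le\Phi_{\max}$, where $0<\sigma<1$ and $Z=\Phi_{\max}^{1-\sigma}/(1-\sigma)$. All users share a temporal preference $w(t)\ge 0$ with $\sum_{t\in T}w(t)=1$; a user with demand $\Phi$ has per-slot demand $\phi(t)=w(t)\Phi$. The willingness to pay is $\gamma(t)=w(t)^{1-\theta}$ with price sensitivity $\theta\in(0,1)$; a user sending volumes $x(t)\le\phi(t)$ and paying $m$ gets net-utility $\sum_{t}\gamma(t)x(t)^\theta-m$. Offloading indicators: constants $\kappa_{\mathrm{avg}},\kappa_{\mathrm{peak}}\in(0,1]$ (independent of price) such that, if $X_{\rm tot}=\sum_t X(t)$ is the total (cellular+WiFi) traffic sent in the cell in a day, then the total daily cellular (3G) traffic is $\kappa_{\mathrm{avg}}X_{\rm tot}$ and the peak per-slot cellular traffic is $\kappa_{\mathrm{peak}}X_{\rm tot}$. Flat pricing with fee $p\ge0$: a user subscribes iff its net-utility $\Phi^\theta-p$ is positive, i.e. iff $\Phi>p^{1/\theta}$, and a subscriber sends its whole demand, $x(t)=\phi(t)$. Let $p_{\max}=\Phi_{\max}^\theta$ (no subscribers for $p\ge p_{\max}$). The provider's revenue (income minus linear cellular cost with coefficient $\eta>0$ per unit of cellular traffic) is, for $0\le p<p_{\max}$,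 $$R(p)=\hat N\int_{p^{1/\theta}}^{\Phi_{\max}}\big(p-\eta\kappa_{\mathrm{avg}}\Phi\big)f_\Phi(\Phi)\,d\Phi,$$ and $R(p)=0$ for $p\ge p_{\max}$. The peak cellular traffic is $A(p)=\kappa_{\mathrm{peak}}\hat N\int_{p^{1/\theta}}^{\Phi_{\max}}\Phi f_\Phi(\Phi)\,d\Phi$. Feasible price set: $\mathcal P=\{p: R(p)>0,\ A(p)\le C_{3g}\}$; threshold price $p_0=\inf\mathcal P$. An equilibrium price is any $p^\star\in\arg\max_{p\in\mathcal P}R(p)$ (it is unique under the stated hypothesis). The network is saturated at $p$ if $A(p)=C_{3g}$; for a unique equilibrium price $p^\star$, the network is called opt-saturated if it is saturated at $p^\star$ and opt-unsaturated otherwise. User surplus is the total net-utility of subscribers; social welfare is user surplus plus provider revenue. *)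

(* Defs.v *)
From Stdlib Require Import Reals Lra ClassicalEpsilon.
Open Scope R_scope.

(* Real power with the convention 0 at non-positive bases
   (Stdlib's Rpower 0 y = 1, which is wrong for p^(1/theta) at p = 0). *)
Definition rpow (x y : R) : R := if Rlt_dec 0 x then Rpower x y else 0.

(* Riemann integral of f over [a,b] (chosen value; meaningful when f is
   Riemann integrable on [a,b]). *)
Definition integral (f : R -> R) (a b : R) : R :=
  epsilon (inhabits 0) (fun v => exists pr : Riemann_integrable f a b, RiemannInt pr = v).

(* Fixed market parameters (everything except kappa_avg, kappa_peak). *)
Record market := Market {
  Nhat : R;      (* mass of users *)
  C3g : R;       (* cellular capacity per slot *)
  Phimax : R;    (* maximal daily demand *)
  sigma : R;     (* demand density exponent *)
  theta : R;     (* price sensitivity *)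
  eta : R        (* cellular cost coefficient *)
}.

Definition valid_market (M : market) : Prop :=
  0 < Nhat M /\ 0 < C3g M /\ 0 < Phimax M /\
  0 < sigma M < 1 /\ 0 < theta M < 1 /\ 0 < eta M.

Definition Zc (M : market) : R := rpow (Phimax M) (1 - sigma M) / (1 - sigma M).
Definition dens (M : market) (x : R) : R := rpow x (- sigma M) / Zc M.

Definition pmax (M : market) : R := rpow (Phimax M) (theta M).

Definition thr (M : market) (p : R) : R := rpow p (1 / theta M).

Definition Rev (M : market) (ka p : R) : R :=
  if Rlt_dec p (pmax M) then
    Nhat M * integral (fun x => (p - eta M * ka * x) * dens M x) (thr M p) (Phimax M)
  else 0.

Definition Apeak (M : market) (kp p : R) : R :=
  if Rlt_dec p (pmax M) then
    kp * Nhat M * integral (fun x => x * dens M x) (thr M p) (Phimax M)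
  else 0.

Definition feasible (M : market) (ka kp p : R) : Prop :=
  0 <= p /\ 0 < Rev M ka p /\ Apeak M kp p <= C3g M.

Definition is_inf (E : R -> Prop) (x : R) : Prop :=
  (forall y, E y -> x <= y) /\ (forall z, (forall y, E y -> z <= y) -> z <= x).

Definition is_eq_price (M : market) (ka kp p : R) : Prop :=
  feasible M ka kp p /\ (forall q, feasible M ka kp q -> Rev M ka q <= Rev M ka p).

Definition pstar (M : market) (ka kp : R) : R :=
  epsilon (inhabits 0) (is_eq_price M ka kp).

(* Net-utility of a user with daily demand Phi under flat fee p:
   sum_t gamma(t) phi(t)^theta - p = Phi^theta - p. *)
Definition net_utility (M : market) (Phi p : R) : R := rpow Phi (theta M) - p.

Definition surplus (M : market) (p : R) : R :=
  if Rlt_dec p (pmax M) then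
    Nhat M * integral (fun x => net_utility M x p * dens M x) (thr M p) (Phimax M)
  else 0.

Definition welfare (M : market) (ka p : R) : R := surplus M p + Rev M ka p.

Definition Rprime_at_p0 (M : market) (ka kp : R) (s : R -> Prop) : Prop :=
  exists p0 d, is_inf (feasible M ka kp) p0 /\
    derivable_pt_lim (Rev M ka) p0 d /\ s d.

(* Main.v *)
Require Import Defs.
From Stdlib Require Import Reals Lra ClassicalEpsilon Ranalysis5.
From Coquelicot Require Import Coquelicot.
Import Defs.
Open Scope R_scope.

Lemma Rp_pos x c : 0 < Rpower x c.
Proof. unfold Rpower; apply exp_pos. Qed.

Lemma rpow_Rp x c : 0 < x -> rpow x c = Rpower x c.
Proof. intros h; unfold rpow; destruct (Rlt_dec 0 x); [reflexivity|lra]. Qed.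

Lemma Rp_add x a b : Rpower x (a + b) = Rpower x a * Rpower x b.
Proof. apply Rpower_plus. Qed.

Lemma Rp_ext x a b : a = b -> Rpower x a = Rpower x b.
Proof. intros ->; reflexivity. Qed.

Lemma Rp_split x e a b : e = a + b -> Rpower x e = Rpower x a * Rpower x b.
Proof. intros ->; apply Rpower_plus. Qed.

Lemma dpl_Rp x c : 0 < x -> derivable_pt_lim (fun y => Rpower y c) x (c * Rpower x (c - 1)).
Proof. apply derivable_pt_lim_power. Qed.

Lemma Derive_Rp x c : 0 < x -> Derive (fun y => Rpower y c) x = c * Rpower x (c - 1).
Proof. intros h. apply is_derive_unique, is_derive_Reals, dpl_Rp, h. Qed.

Lemma exd_Rp x c : 0 < x -> ex_derive (fun y => Rpower y c) x.
Proof. intros h. exists (c * Rpower x (c - 1)). apply is_derive_Reals, dpl_Rp, h. Qed.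

Lemma dpl_loc (f g : R -> R) x l r : 0 < r -> (forall y, Rabs (y - x) < r -> f y = g y) ->
  derivable_pt_lim g x l -> derivable_pt_lim f x l.
Proof.
  intros hr he hg eps heps. destruct (hg eps heps) as [d hd].
  exists (mkposreal (Rmin d r) (Rmin_pos _ _ (cond_pos d) hr)). simpl. intros h hh0 hh.
  rewrite (he (x + h)), (he x).
  - apply hd; auto. apply Rlt_le_trans with (1:=hh), Rmin_l.
  - replace (x - x) with 0 by ring; rewrite Rabs_R0; lra.
  - replace (x + h - x) with h by ring. apply Rlt_le_trans with (1:=hh), Rmin_r.
Qed.

Lemma dpl_rpow x c : 0 < x -> derivable_pt_lim (fun y => rpow y c) x (c * Rpower x (c - 1)).
Proof.
  intros h. apply dpl_loc with (g := fun y => Rpower y c) (r := x); auto.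
  intros y hy. apply rpow_Rp. apply Rabs_def2 in hy. lra.
  apply dpl_Rp, h.
Qed.


Lemma integral_val f a b (pr : Riemann_integrable f a b) : integral f a b = RiemannInt pr.
Proof.
  unfold integral.
  destruct (epsilon_spec (inhabits 0) (fun v => exists pr : Riemann_integrable f a b, RiemannInt pr = v)) as [pr' H].
  { exists (RiemannInt pr), pr; reflexivity. }
  rewrite <- H. apply RiemannInt_P5.
Qed.

Lemma integral_FTC f G a b : a <= b ->
  (forall x, a <= x <= b -> derivable_pt_lim G x (f x)) ->
  (forall x, a <= x <= b -> continuity_pt f x) ->
  integral f a b = G b - G a.
Proof.
  intros hab hd hc.
  pose proof (@continuity_implies_RiemannInt f a b hab hc) as pr.
  rewrite (integral_val f a b pr).
  rewrite <- Coquelicot.RInt.RInt_Reals.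
  apply (@Coquelicot.RInt.is_RInt_unique Coquelicot.Hierarchy.R_CompleteNormedModule).
  change (G b - G a) with (@Coquelicot.Hierarchy.minus Coquelicot.Hierarchy.R_AbelianGroup (G b) (G a)).
  apply (@Coquelicot.RInt_analysis.is_RInt_derive Coquelicot.Hierarchy.R_CompleteNormedModule G f).
  - intros x hx. apply Coquelicot.Derive.is_derive_Reals. apply hd.
    rewrite Rmin_left, Rmax_right in hx; auto.
  - intros x hx. apply Coquelicot.Hierarchy.continuity_pt_filterlim. apply hc.
    rewrite Rmin_left, Rmax_right in hx; auto.
Qed.

Ltac vm hv := destruct hv as (hN & hC & hF & [hs0 hs1] & [ht0 ht1] & he).

Lemma Zc_eq M : 0 < Phimax M -> Zc M = Rpower (Phimax M) (1 - sigma M) / (1 - sigma M).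
Proof. intros h. unfold Zc. rewrite rpow_Rp; auto. Qed.

Lemma Zc_pos M : valid_market M -> 0 < Zc M.
Proof. intros hv. pose proof hv as hv'. vm hv'. rewrite Zc_eq; auto.
  apply Rdiv_lt_0_compat; [apply Rp_pos|lra]. Qed.

Lemma cont_form (f g : R -> R) x : 0 < x -> (forall y, 0 < y -> f y = g y) -> ex_derive g x -> continuity_pt f x.
Proof.
  intros hx he [l hl]. apply is_derive_Reals in hl.
  apply derivable_continuous_pt. exists l.
  apply dpl_loc with (g := g) (r := x); auto.
  intros y hy. apply he. apply Rabs_def2 in hy. lra.
Qed.

Definition F1 M t := (Rpower (Phimax M) (1 - sigma M) - Rpower t (1 - sigma M)) / (1 - sigma M).
Definition F2 M t := (Rpower (Phimax M) (2 - sigma M) - Rpower t (2 - sigma M)) / (2 - sigma M).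
Definition F3 M t := (Rpower (Phimax M) (1 + theta M - sigma M) - Rpower t (1 + theta M - sigma M)) / (1 + theta M - sigma M).

Lemma int_R M p k t : valid_market M -> 0 < t <= Phimax M ->
  integral (fun x => (p - eta M * k * x) * dens M x) t (Phimax M) = (p * F1 M t - eta M * k * F2 M t) / Zc M.
Proof.
  intros hv ht. pose proof (Zc_pos M hv) as hZ. vm hv.
  rewrite (integral_FTC _ (fun x => (p * (Rpower x (1 - sigma M) / (1 - sigma M)) - eta M * k * (Rpower x (2 - sigma M) / (2 - sigma M))) / Zc M)).
  - unfold F1, F2. field. split; lra.
  - lra.
  - intros x hx. apply is_derive_Reals. auto_derive.
    + repeat split; apply exd_Rp; lra.
    + rewrite !Derive_Rp by lra. unfold dens. rewrite rpow_Rp by lra.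
      rewrite (Rp_ext x (1 - sigma M - 1) (- sigma M)) by ring.
      rewrite (Rp_split x (2 - sigma M - 1) 1 (- sigma M)) by ring.
      rewrite Rpower_1 by lra. field. repeat split; lra.
  - intros x hx.
    apply cont_form with (g := fun y => (p - eta M * k * y) * Rpower y (- sigma M) / Zc M). lra.
    intros y hy. unfold dens. rewrite rpow_Rp by lra. unfold Rdiv; ring.
    auto_derive. repeat split; apply exd_Rp; lra.
Qed.

Lemma int_A M t : valid_market M -> 0 < t <= Phimax M ->
  integral (fun x => x * dens M x) t (Phimax M) = F2 M t / Zc M.
Proof.
  intros hv ht. pose proof (Zc_pos M hv) as hZ. vm hv.
  rewrite (integral_FTC _ (fun x => (Rpower x (2 - sigma M) / (2 - sigma M)) / Zc M)).
  - unfold F2. field. split; lra.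
  - lra.
  - intros x hx. apply is_derive_Reals. auto_derive.
    + repeat split; apply exd_Rp; lra.
    + rewrite !Derive_Rp by lra. unfold dens. rewrite rpow_Rp by lra.
      rewrite (Rp_split x (2 - sigma M - 1) 1 (- sigma M)) by ring.
      rewrite Rpower_1 by lra. field. repeat split; lra.
  - intros x hx.
    apply cont_form with (g := fun y => y * Rpower y (- sigma M) / Zc M). lra.
    intros y hy. unfold dens. rewrite rpow_Rp by lra. unfold Rdiv; ring.
    auto_derive. repeat split; apply exd_Rp; lra.
Qed.

Lemma int_S M p t : valid_market M -> 0 < t <= Phimax M ->
  integral (fun x => net_utility M x p * dens M x) t (Phimax M) = (F3 M t - p * F1 M t) / Zc M.
Proof.
  intros hv ht. pose proof (Zc_pos M hv) as hZ. vm hv.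
  rewrite (integral_FTC _ (fun x => (Rpower x (1 + theta M - sigma M) / (1 + theta M - sigma M) - p * (Rpower x (1 - sigma M) / (1 - sigma M))) / Zc M)).
  - unfold F1, F3. field. split; lra.
  - lra.
  - intros x hx. apply is_derive_Reals. auto_derive.
    + repeat split; apply exd_Rp; lra.
    + rewrite !Derive_Rp by lra. unfold dens, net_utility. rewrite !rpow_Rp by lra.
      rewrite (Rp_ext x (1 - sigma M - 1) (- sigma M)) by ring.
      rewrite (Rp_split x (1 + theta M - sigma M - 1) (theta M) (- sigma M)) by ring.
      field. repeat split; lra.
  - intros x hx.
    apply cont_form with (g := fun y => (Rpower y (theta M) - p) * Rpower y (- sigma M) / Zc M). lra.
    intros y hy. unfold dens, net_utility. rewrite !rpow_Rp by lra. unfold Rdiv; ring.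
    auto_derive. repeat split; apply exd_Rp; lra.
Qed.

Lemma thr_eq M p : 0 < p -> thr M p = Rpower p (1 / theta M).
Proof. intros h; unfold thr; apply rpow_Rp, h. Qed.

Lemma pmax_eq M : 0 < Phimax M -> pmax M = Rpower (Phimax M) (theta M).
Proof. intros h; unfold pmax; apply rpow_Rp, h. Qed.

Lemma Rp_thr M p : valid_market M -> 0 < p -> Rpower (thr M p) (theta M) = p.
Proof. intros hv h. vm hv. rewrite thr_eq, Rpower_mult by auto.
  rewrite (Rp_ext p _ 1) by (field; lra). apply Rpower_1, h. Qed.

Lemma thr_Rp M t : valid_market M -> 0 < t -> thr M (Rpower t (theta M)) = t.
Proof. intros hv h. pose proof hv as hv'; vm hv'. rewrite thr_eq by apply Rp_pos. rewrite Rpower_mult.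
  rewrite (Rp_ext t _ 1) by (field; lra). apply Rpower_1, h. Qed.

Lemma thr_pos M p : 0 < p -> 0 < thr M p.
Proof. intros h; rewrite thr_eq by auto; apply Rp_pos. Qed.

Lemma thr_lt M p : valid_market M -> 0 < p < pmax M -> thr M p < Phimax M.
Proof. intros hv [h1 h2]. pose proof hv as hv'; vm hv'. rewrite pmax_eq in h2 by auto.
  rewrite <- (thr_Rp M (Phimax M)) by auto. rewrite !thr_eq by (auto; apply Rp_pos).
  apply Rlt_Rpower_l. apply Rdiv_lt_0_compat; lra. lra. Qed.

Lemma Rp_lt_pmax M t : valid_market M -> 0 < t < Phimax M -> Rpower t (theta M) < pmax M.
Proof. intros hv [h1 h2]. pose proof hv as hv'; vm hv'. rewrite pmax_eq by auto.
  apply Rlt_Rpower_l; lra. Qed.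

Definition KK M := Nhat M / Zc M.
Definition rr M k t := KK M * (Rpower t (theta M) * F1 M t - eta M * k * F2 M t).
Definition aa M k t := k * KK M * F2 M t.
Definition ss M t := KK M * (F3 M t - Rpower t (theta M) * F1 M t).
Definition hh M k t := F1 M t - Rpower t (1 - sigma M) / theta M + eta M * k / theta M * Rpower t (2 - sigma M - theta M).

Lemma Rev_cf M k p : valid_market M -> 0 < p < pmax M -> Rev M k p = rr M k (thr M p).
Proof. intros hv hp. unfold Rev. destruct (Rlt_dec p (pmax M)); [|lra].
  pose proof (thr_lt M p hv hp). pose proof (thr_pos M p (proj1 hp)).
  rewrite int_R by (auto; lra). unfold rr, KK. rewrite Rp_thr by (auto; lra).
  pose proof (Zc_pos M hv). field. lra. Qed.

Lemma Apeak_cf M k p : valid_market M -> 0 < p < pmax M -> Apeak M k p = aa M k (thr M p).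
Proof. intros hv hp. unfold Apeak. destruct (Rlt_dec p (pmax M)); [|lra].
  pose proof (thr_lt M p hv hp). pose proof (thr_pos M p (proj1 hp)).
  rewrite int_A by (auto; lra). unfold aa, KK.
  pose proof (Zc_pos M hv). field. lra. Qed.

Lemma surplus_cf M p : valid_market M -> 0 < p < pmax M -> surplus M p = ss M (thr M p).
Proof. intros hv hp. unfold surplus. destruct (Rlt_dec p (pmax M)); [|lra].
  pose proof (thr_lt M p hv hp). pose proof (thr_pos M p (proj1 hp)).
  rewrite int_S by (auto; lra). unfold ss, KK. rewrite Rp_thr by (auto; lra).
  pose proof (Zc_pos M hv). field. lra. Qed.

Lemma thr0 M : thr M 0 = 0.
Proof. unfold thr, rpow. destruct (Rlt_dec 0 0); [lra|auto]. Qed.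

Lemma Rev0 M k : valid_market M -> 0 <= k -> Rev M k 0 <= 0.
Proof.
  intros hv hk. pose proof (Zc_pos M hv) as hZ. pose proof hv as hv'. vm hv'.
  unfold Rev. destruct (Rlt_dec 0 (pmax M)); [|lra]. rewrite thr0.
  set (f := fun x => (0 - eta M * k * x) * dens M x).
  assert (hc : forall x, 0 <= x <= Phimax M -> continuity_pt f x).
  { intros x [hx0 hx1]. destruct (Req_dec x 0) as [->|hx].
    - intros eps heps.
      set (c := eta M * k + 1).
      assert (hcp : 0 < c) by (unfold c; nra).
      exists (Rpower (eps * Zc M / c) (1 / (1 - sigma M))). split. apply Rp_pos.
      intros y [_ hy]. simpl in hy. unfold R_dist in *. simpl. unfold R_dist.
      assert (hf0 : f 0 = 0) by (unfold f; ring). rewrite hf0, Rminus_0_r.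
      rewrite Rminus_0_r in hy.
      destruct (Rle_dec y 0) as [hy0|hy0].
      + unfold f, dens, rpow. destruct (Rlt_dec 0 y); [lra|]. unfold Rdiv. rewrite Rmult_0_l, Rmult_0_r, Rabs_R0. lra.
      + assert (hyp : 0 < y) by lra.
        unfold f, dens. rewrite rpow_Rp by lra.
        replace ((0 - eta M * k * y) * (Rpower y (- sigma M) / Zc M)) with (- (eta M * k / Zc M * Rpower y (1 - sigma M))).
        2: { rewrite (Rp_split y (1 - sigma M) 1 (- sigma M)) by ring. rewrite Rpower_1 by lra. field. lra. }
        rewrite Rabs_Ropp, Rabs_right.
        2: { apply Rle_ge, Rmult_le_pos. apply Rmult_le_pos; [nra| left; apply Rinv_0_lt_compat; lra]. left; apply Rp_pos. }
        rewrite Rabs_right in hy by lra.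
        assert (hlt : Rpower y (1 - sigma M) < eps * Zc M / c).
        { replace (eps * Zc M / c) with (Rpower (Rpower (eps * Zc M / c) (1 / (1 - sigma M))) (1 - sigma M)).
          apply Rlt_Rpower_l; lra.
          rewrite Rpower_mult. rewrite (Rp_ext _ _ 1) by (field; lra). apply Rpower_1.
          apply Rdiv_lt_0_compat; [nra|lra]. }
        apply Rle_lt_trans with (eta M * k / Zc M * (eps * Zc M / c)).
        { apply Rmult_le_compat_l. apply Rmult_le_pos; [nra| left; apply Rinv_0_lt_compat; lra]. lra. }
        replace (eta M * k / Zc M * (eps * Zc M / c)) with (eps * (eta M * k / c)) by (field; lra).
        assert (eta M * k / c < 1). { apply Rmult_lt_reg_r with c; auto. unfold Rdiv. rewrite Rmult_assoc, Rinv_l by lra. unfold c; lra. }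
        assert (0 <= eta M * k / c). { apply Rmult_le_pos; [nra| left; apply Rinv_0_lt_compat; lra]. }
        nra.
    - apply cont_form with (g := fun y => (0 - eta M * k * y) * Rpower y (- sigma M) / Zc M). lra.
      intros y hy. unfold f, dens. rewrite rpow_Rp by lra. unfold Rdiv; ring.
      auto_derive. repeat split; apply exd_Rp; lra. }
  pose proof (@continuity_implies_RiemannInt f 0 (Phimax M) (Rlt_le _ _ hF) hc) as pr.
  rewrite (integral_val f 0 (Phimax M) pr).
  assert (RiemannInt pr <= 0).
  { pose proof (@continuity_implies_RiemannInt (fun _ => 0) 0 (Phimax M) (Rlt_le _ _ hF) (fun x _ => continuity_pt_const (fun _ => 0) x (fun _ _ => eq_refl))) as pr0.
    apply Rle_trans with (RiemannInt pr0).
    - apply RiemannInt_P19; [lra|]. intros x hx. unfold f, dens. rewrite rpow_Rp by lra.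
      assert (0 < Rpower x (- sigma M) / Zc M) by (apply Rdiv_lt_0_compat; [apply Rp_pos|lra]).
      assert (0 <= eta M * k * x) by (apply Rmult_le_pos; nra). nra.
    - destruct (RiemannInt_const_bound (l := 0) (u := 0) pr0) as [_ hu]. lra.
      intros; lra. lra. }
  nra.
Qed.

Definition al M := Rpower (Phimax M) (1 - sigma M) / (1 - sigma M).
Definition Aco M := 1 / (1 - sigma M) + 1 / theta M.
Definition phi M t := theta M / eta M * (Aco M * Rpower t (theta M - 1) - al M * Rpower t (sigma M + theta M - 2)).
Definition dphi M t := theta M / eta M * Rpower t (sigma M + theta M - 3) *
   (al M * (2 - sigma M - theta M) - Aco M * (1 - theta M) * Rpower t (1 - sigma M)).
Definition Qm M := al M * (2 - sigma M - theta M) / (Aco M * (1 - theta M)).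
Definition tm M := Rpower (Qm M) (1 / (1 - sigma M)).

Lemma Rp_opp x a : Rpower x (- a) = / Rpower x a.
Proof. apply Rpower_Ropp. Qed.

Lemma Rp_ne x a : Rpower x a <> 0.
Proof. pose proof (Rp_pos x a); lra. Qed.

Lemma al_pos M : valid_market M -> 0 < al M.
Proof. intros hv; vm hv. unfold al. apply Rdiv_lt_0_compat; [apply Rp_pos|lra]. Qed.

Lemma Aco_pos M : valid_market M -> 0 < Aco M.
Proof. intros hv; vm hv. unfold Aco.
  assert (0 < 1 / (1 - sigma M)) by (apply Rdiv_lt_0_compat; lra).
  assert (0 < 1 / theta M) by (apply Rdiv_lt_0_compat; lra). lra. Qed.

Lemma Qm_pos M : valid_market M -> 0 < Qm M.
Proof. intros hv. pose proof (al_pos M hv). pose proof (Aco_pos M hv). vm hv. unfold Qm.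
  apply Rdiv_lt_0_compat; apply Rmult_lt_0_compat; lra. Qed.

Lemma hh_phi M k t : valid_market M -> 0 < t ->
  hh M k t = eta M / theta M * Rpower t (2 - sigma M - theta M) * (k - phi M t).
Proof.
  intros hv ht. vm hv. unfold hh, phi, F1, al, Aco.
  rewrite (Rp_split t (theta M - 1) (1 - sigma M) (- (2 - sigma M - theta M))) by ring.
  rewrite (Rp_ext t (sigma M + theta M - 2) (- (2 - sigma M - theta M))) by ring.
  rewrite !Rp_opp. pose proof (Rp_ne t (2 - sigma M - theta M)).
  field. repeat split; lra.
Qed.

Lemma dphi_lim M t : valid_market M -> 0 < t -> derivable_pt_lim (phi M) t (dphi M t).
Proof.
  intros hv ht. vm hv. apply is_derive_Reals. unfold phi. auto_derive.
  - repeat split; apply exd_Rp; lra.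
  - rewrite !Derive_Rp by lra. unfold dphi.
    rewrite (Rp_split t (theta M - 1 - 1) (sigma M + theta M - 3) (1 - sigma M)) by ring.
    rewrite (Rp_ext t (sigma M + theta M - 2 - 1) (sigma M + theta M - 3)) by ring.
    field. lra.
Qed.

Lemma tm_pos M : 0 < tm M.
Proof. apply Rp_pos. Qed.

Lemma tm_pow M : valid_market M -> Rpower (tm M) (1 - sigma M) = Qm M.
Proof. intros hv. pose proof (Qm_pos M hv). vm hv. unfold tm. rewrite Rpower_mult.
  rewrite (Rp_ext _ _ 1) by (field; lra). apply Rpower_1; auto. Qed.

Lemma lt_tm M c : valid_market M -> 0 < c -> c < tm M -> Rpower c (1 - sigma M) < Qm M.
Proof. intros hv hc h. rewrite <- (tm_pow M hv). pose proof hv as hv'; vm hv'.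
  apply Rlt_Rpower_l; lra. Qed.

Lemma gt_tm M c : valid_market M -> tm M < c -> Qm M < Rpower c (1 - sigma M).
Proof. intros hv h. rewrite <- (tm_pow M hv). pose proof (tm_pos M). pose proof hv as hv'; vm hv'.
  apply Rlt_Rpower_l; lra. Qed.

Lemma dphi_pos M c : valid_market M -> 0 < c -> c < tm M -> 0 < dphi M c.
Proof. intros hv hc h. pose proof (lt_tm M c hv hc h). pose proof (Aco_pos M hv).
  pose proof (al_pos M hv). pose proof hv as hv'; vm hv'.
  unfold Qm in *. unfold dphi. apply Rmult_lt_0_compat.
  apply Rmult_lt_0_compat. apply Rdiv_lt_0_compat; lra. apply Rp_pos.
  assert (hA : 0 < Aco M * (1 - theta M)) by nra.
  apply Rmult_lt_compat_r with (r := Aco M * (1 - theta M)) in H; auto.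
  unfold Rdiv in H. rewrite Rmult_assoc, Rinv_l in H by lra. lra.
Qed.

Lemma dphi_neg M c : valid_market M -> tm M < c -> dphi M c < 0.
Proof. intros hv h. pose proof (gt_tm M c hv h). pose proof (Aco_pos M hv).
  pose proof (al_pos M hv). pose proof hv as hv'; vm hv'.
  unfold Qm in *. unfold dphi.
  assert (hA : 0 < Aco M * (1 - theta M)) by nra.
  apply Rmult_lt_compat_r with (r := Aco M * (1 - theta M)) in H; auto.
  unfold Rdiv in H. rewrite Rmult_assoc, Rinv_l in H by lra.
  assert (0 < theta M / eta M * Rpower c (sigma M + theta M - 3)).
  { apply Rmult_lt_0_compat. apply Rdiv_lt_0_compat; lra. apply Rp_pos. }
  assert (al M * (2 - sigma M - theta M) - Aco M * (1 - theta M) * Rpower c (1 - sigma M) < 0) by lra.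
  nra.
Qed.

Lemma phi_M1 M a b : valid_market M -> 0 < a -> a < b -> b <= tm M -> phi M a < phi M b.
Proof. intros hv ha hab hb.
  destruct (MVT_cor2 (phi M) (dphi M) a b hab) as [c [hc1 hc2]].
  - intros c hc. apply dphi_lim; auto; lra.
  - pose proof (dphi_pos M c hv ltac:(lra) ltac:(lra)). nra.
Qed.

Lemma phi_M2 M a b : valid_market M -> tm M <= a -> a < b -> phi M b < phi M a.
Proof. intros hv ha hab. pose proof (tm_pos M).
  destruct (MVT_cor2 (phi M) (dphi M) a b hab) as [c [hc1 hc2]].
  - intros c hc. apply dphi_lim; auto; lra.
  - pose proof (dphi_neg M c hv ltac:(lra)). nra.
Qed.

Lemma phi_Phi M : valid_market M -> phi M (Phimax M) = Rpower (Phimax M) (theta M - 1) / eta M.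
Proof. intros hv; vm hv. unfold phi, al, Aco.
  rewrite (Rp_split (Phimax M) (theta M - 1) (1 - sigma M) (sigma M + theta M - 2)) by ring.
  field. repeat split; lra.
Qed.

Lemma eta_hyp M k : valid_market M -> 0 < k ->
  eta M < / (k * rpow (Phimax M) (1 - theta M)) -> k < phi M (Phimax M).
Proof. intros hv hk h. rewrite phi_Phi by auto. pose proof hv as hv'; vm hv'.
  rewrite rpow_Rp in h by auto.
  rewrite (Rp_ext _ (theta M - 1) (- (1 - theta M))) by ring. rewrite Rp_opp.
  pose proof (Rp_pos (Phimax M) (1 - theta M)).
  apply Rmult_lt_compat_r with (r := k * Rpower (Phimax M) (1 - theta M)) in h; [|nra].
  rewrite Rinv_l in h by nra.
  apply Rmult_lt_reg_r with (eta M * Rpower (Phimax M) (1 - theta M)). nra.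
  replace (/ Rpower (Phimax M) (1 - theta M) / eta M * (eta M * Rpower (Phimax M) (1 - theta M))) with 1 by (field; lra). lra.
Qed.

Lemma phi_GEN M kap t1 c : valid_market M -> 0 < t1 -> t1 < c -> c <= Phimax M ->
  kap <= phi M t1 -> kap < phi M (Phimax M) -> kap < phi M c.
Proof. intros hv h1 h2 h3 h4 h5.
  destruct (Rle_dec c (tm M)).
  - pose proof (phi_M1 M t1 c hv h1 h2 r). lra.
  - destruct (Req_dec c (Phimax M)) as [->|hne]; auto.
    pose proof (phi_M2 M c (Phimax M) hv ltac:(lra) ltac:(lra)). lra.
Qed.

Lemma KK_pos M : valid_market M -> 0 < KK M.
Proof. intros hv. pose proof (Zc_pos M hv). vm hv. unfold KK. apply Rdiv_lt_0_compat; lra. Qed.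

Lemma Rp_m1 t : 0 < t -> Rpower t (-1) = / t.
Proof. intros h. replace (-1) with (- (1)) by ring. rewrite Rp_opp, Rpower_1; auto. Qed.

Lemma drr M k t : valid_market M -> 0 < t ->
  derivable_pt_lim (rr M k) t (KK M * theta M * Rpower t (theta M - 1) * hh M k t).
Proof.
  intros hv ht. vm hv. apply is_derive_Reals. unfold rr, hh, F1, F2. auto_derive.
  - repeat split; apply exd_Rp; lra.
  - rewrite !Derive_Rp by lra.
    rewrite (Rp_split t (theta M) 1 (theta M - 1)) by ring.
    rewrite (Rp_split t (1 - sigma M - 1) (1 - sigma M) (-1)) by ring.
    rewrite (Rp_ext t (2 - sigma M - 1) (1 - sigma M)) by ring.
    rewrite (Rp_split t (2 - sigma M - theta M) (1 - sigma M) (- (theta M - 1))) by ring.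
    rewrite ?Rp_m1, ?Rp_opp, ?Rpower_1 by lra. pose proof (Rp_ne t (theta M - 1)).
    field. repeat split; lra.
Qed.

Lemma dss M t : valid_market M -> 0 < t ->
  derivable_pt_lim (ss M) t (- KK M * theta M * Rpower t (theta M - 1) * F1 M t).
Proof.
  intros hv ht. vm hv. apply is_derive_Reals. unfold ss, F1, F3. auto_derive.
  - repeat split; apply exd_Rp; lra.
  - rewrite !Derive_Rp by lra.
    rewrite (Rp_split t (theta M) 1 (theta M - 1)) by ring.
    rewrite (Rp_split t (1 - sigma M - 1) (1 - sigma M) (-1)) by ring.
    rewrite (Rp_split t (1 + theta M - sigma M - 1) (1 - sigma M) (theta M - 1)) by ring.
    rewrite ?Rp_m1, ?Rp_opp, ?Rpower_1 by lra. pose proof (Rp_ne t (theta M - 1)).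
    field. repeat split; lra.
Qed.

Lemma daa M k t : valid_market M -> 0 < t ->
  derivable_pt_lim (aa M k) t (- k * KK M * Rpower t (1 - sigma M)).
Proof.
  intros hv ht. vm hv. apply is_derive_Reals. unfold aa, F2. auto_derive.
  - repeat split; apply exd_Rp; lra.
  - rewrite !Derive_Rp by lra.
    rewrite (Rp_ext t (2 - sigma M - 1) (1 - sigma M)) by ring. field. lra.
Qed.

Lemma F2_decr M a b : valid_market M -> 0 < a < b -> F2 M b < F2 M a.
Proof. intros hv h. vm hv. unfold F2.
  pose proof (Rlt_Rpower_l a b (2 - sigma M) ltac:(lra) h).
  apply Rmult_lt_compat_r. apply Rinv_0_lt_compat; lra. lra. Qed.

Lemma F2_pos M t : valid_market M -> 0 < t < Phimax M -> 0 < F2 M t.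
Proof. intros hv h. vm hv. unfold F2.
  pose proof (Rlt_Rpower_l t (Phimax M) (2 - sigma M) ltac:(lra) h).
  apply Rdiv_lt_0_compat; lra. Qed.

Lemma F1_pos M t : valid_market M -> 0 < t < Phimax M -> 0 < F1 M t.
Proof. intros hv h. vm hv. unfold F1.
  pose proof (Rlt_Rpower_l t (Phimax M) (1 - sigma M) ltac:(lra) h).
  apply Rdiv_lt_0_compat; lra. Qed.

Lemma aa_decr M k a b : valid_market M -> 0 < k -> 0 < a < b -> aa M k b < aa M k a.
Proof. intros hv hk h. pose proof (F2_decr M a b hv h). pose proof (KK_pos M hv).
  unfold aa. apply Rmult_lt_compat_l; nra. Qed.

Lemma rr_incr M k a b : valid_market M -> 0 < a -> a < b ->
  (forall c, a < c < b -> phi M c < k) -> rr M k a < rr M k b.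
Proof. intros hv ha hab hc.
  destruct (MVT_cor2 (rr M k) (fun t => KK M * theta M * Rpower t (theta M - 1) * hh M k t) a b hab) as [c [e hc']].
  - intros c hc2. apply drr; auto; lra.
  - rewrite hh_phi in e by (auto; lra). pose proof (hc c hc'). pose proof (KK_pos M hv).
    pose proof (Rp_pos c (theta M - 1)). pose proof (Rp_pos c (2 - sigma M - theta M)).
    pose proof hv as hv'; vm hv'.
    assert (0 < KK M * theta M * Rpower c (theta M - 1) * (eta M / theta M * Rpower c (2 - sigma M - theta M) * (k - phi M c))).
    { assert (0 < eta M / theta M) by (apply Rdiv_lt_0_compat; lra).
      apply Rmult_lt_0_compat; [apply Rmult_lt_0_compat; [apply Rmult_lt_0_compat|]|apply Rmult_lt_0_compat; [apply Rmult_lt_0_compat|]]; lra. }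
    nra.
Qed.

Lemma rr_decr M k a b : valid_market M -> 0 < a -> a < b ->
  (forall c, a < c < b -> k < phi M c) -> rr M k b < rr M k a.
Proof. intros hv ha hab hc.
  destruct (MVT_cor2 (rr M k) (fun t => KK M * theta M * Rpower t (theta M - 1) * hh M k t) a b hab) as [c [e hc']].
  - intros c hc2. apply drr; auto; lra.
  - rewrite hh_phi in e by (auto; lra). pose proof (hc c hc'). pose proof (KK_pos M hv).
    pose proof (Rp_pos c (theta M - 1)). pose proof (Rp_pos c (2 - sigma M - theta M)).
    pose proof hv as hv'; vm hv'.
    assert (0 < KK M * theta M * Rpower c (theta M - 1) * (eta M / theta M * Rpower c (2 - sigma M - theta M) * (phi M c - k))).
    { assert (0 < eta M / theta M) by (apply Rdiv_lt_0_compat; lra).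
      apply Rmult_lt_0_compat; [apply Rmult_lt_0_compat; [apply Rmult_lt_0_compat|]|apply Rmult_lt_0_compat; [apply Rmult_lt_0_compat|]]; lra. }
    nra.
Qed.

Lemma pmax_pos M : valid_market M -> 0 < pmax M.
Proof. intros hv; vm hv. rewrite pmax_eq by auto. apply Rp_pos. Qed.

Lemma feas_dom M k kp q : valid_market M -> 0 < k -> feasible M k kp q -> 0 < q < pmax M.
Proof. intros hv hk [h0 [hR hA]]. split.
  - destruct h0 as [h0| <-]; auto. pose proof (Rev0 M k hv ltac:(lra)). lra.
  - destruct (Rlt_dec q (pmax M)); auto. unfold Rev in hR. destruct (Rlt_dec q (pmax M)); [contradiction|lra].
Qed.

Lemma unique_max M k kp p1 : feasible M k kp p1 ->
  (forall q, feasible M k kp q -> q <> p1 -> Rev M k q < Rev M k p1) ->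
  forall q, is_eq_price M k kp q <-> q = p1.
Proof. intros hf hm q. split.
  - intros [hq hmax]. destruct (Req_dec q p1); auto. pose proof (hm q hq H). pose proof (hmax p1 hf). lra.
  - intros ->. split; auto. intros q' hq'. destruct (Req_dec q' p1) as [->|hne]; [lra|]. left; apply hm; auto.
Qed.

Lemma q_thr M q : valid_market M -> 0 < q -> q = Rpower (thr M q) (theta M).
Proof. intros; rewrite Rp_thr; auto. Qed.

Lemma L_sat M ka kp t1 : valid_market M -> 0 < ka -> 0 < kp -> 0 < t1 < Phimax M ->
  aa M kp t1 = C3g M -> 0 < rr M ka t1 -> ka <= phi M t1 -> ka < phi M (Phimax M) ->
  forall q, is_eq_price M ka kp q <-> q = Rpower t1 (theta M).
Proof.
  intros hv hka hkp ht1 hA hr hphi hphiM.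
  pose proof (Rp_lt_pmax M t1 hv ht1). pose proof (Rp_pos t1 (theta M)).
  assert (hp1 : 0 < Rpower t1 (theta M) < pmax M) by lra.
  apply unique_max.
  - split; [lra|]. rewrite Rev_cf, Apeak_cf, thr_Rp by (auto; lra). split; lra.
  - intros q hq hne. pose proof (feas_dom M ka kp q hv hka hq) as hqd.
    destruct hq as [_ [hR hAq]].
    rewrite (Rev_cf M ka q) in hR |- * by auto. rewrite (Rev_cf M ka (Rpower t1 (theta M))) by auto.
    rewrite Apeak_cf in hAq by auto. rewrite thr_Rp by (auto; lra).
    pose proof (thr_pos M q (proj1 hqd)). pose proof (thr_lt M q hv hqd).
    destruct (Rtotal_order (thr M q) t1) as [hl|[he|hg]].
    + pose proof (aa_decr M kp (thr M q) t1 hv hkp ltac:(lra)). lra.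
    + exfalso. apply hne. rewrite (q_thr M q hv (proj1 hqd)), he. reflexivity.
    + apply rr_decr; auto; try lra. intros c hc. apply (phi_GEN M ka t1 c); auto; lra.
Qed.

Lemma L_unsat M k kp t1 : valid_market M -> 0 < k -> 0 < kp -> 0 < t1 < Phimax M -> t1 <= tm M ->
  phi M t1 = k -> k < phi M (Phimax M) -> 0 < rr M k t1 -> aa M kp t1 <= C3g M ->
  forall q, is_eq_price M k kp q <-> q = Rpower t1 (theta M).
Proof.
  intros hv hk hkp ht1 htm hphi hphiM hr hA.
  pose proof (Rp_lt_pmax M t1 hv ht1). pose proof (Rp_pos t1 (theta M)).
  assert (hp1 : 0 < Rpower t1 (theta M) < pmax M) by lra.
  apply unique_max.
  - split; [lra|]. rewrite Rev_cf, Apeak_cf, thr_Rp by (auto; lra). split; lra.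
  - intros q hq hne. pose proof (feas_dom M k kp q hv hk hq) as hqd.
    destruct hq as [_ [hR hAq]].
    rewrite (Rev_cf M k q) in hR |- * by auto. rewrite (Rev_cf M k (Rpower t1 (theta M))) by auto.
    rewrite thr_Rp by (auto; lra).
    pose proof (thr_pos M q (proj1 hqd)). pose proof (thr_lt M q hv hqd).
    destruct (Rtotal_order (thr M q) t1) as [hl|[he|hg]].
    + apply rr_incr; auto. intros c hc. rewrite <- hphi. apply phi_M1; auto; lra.
    + exfalso. apply hne. rewrite (q_thr M q hv (proj1 hqd)), he. reflexivity.
    + apply rr_decr; auto; try lra. intros c hc. apply (phi_GEN M k t1 c); auto; lra.
Qed.

Lemma cont_eps f x l : derivable_pt_lim f x l ->
  forall eps, 0 < eps -> exists del, 0 < del /\ forall y, Rabs (y - x) < del -> Rabs (f y - f x) < eps.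
Proof.
  intros hd eps he.
  pose proof (derivable_continuous_pt f x (exist _ l hd)) as hc.
  destruct (hc eps he) as [del [hdel h]]. exists del; split; auto.
  intros y hy. destruct (Req_dec y x) as [->|hne].
  - rewrite Rminus_eq_0, Rabs_R0; lra.
  - apply (h y). split; [split; [exact I| auto]|]. simpl. unfold R_dist. exact hy.
Qed.

Lemma dthr M p : valid_market M -> 0 < p ->
  derivable_pt_lim (thr M) p (1 / theta M * Rpower p (1 / theta M - 1)).
Proof. intros hv hp. unfold thr. apply dpl_rpow, hp. Qed.

Definition dthrv M p := 1 / theta M * Rpower p (1 / theta M - 1).

Lemma dthrv_pos M p : valid_market M -> 0 < dthrv M p.
Proof. intros hv; vm hv. unfold dthrv. apply Rmult_lt_0_compat. apply Rdiv_lt_0_compat; lra. apply Rp_pos. Qed.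

Lemma Rev_dpl M k p : valid_market M -> 0 < p < pmax M ->
  derivable_pt_lim (Rev M k) p (KK M * theta M * Rpower (thr M p) (theta M - 1) * hh M k (thr M p) * dthrv M p).
Proof.
  intros hv hp. apply dpl_loc with (g := fun y => rr M k (thr M y)) (r := Rmin p (pmax M - p)).
  - apply Rmin_pos; lra.
  - intros y hy. apply Rabs_def2 in hy. destruct hy as [h1 h2].
    pose proof (Rmin_l p (pmax M - p)). pose proof (Rmin_r p (pmax M - p)).
    apply Rev_cf; auto; lra.
  - apply (derivable_pt_lim_comp (thr M) (rr M k)). apply dthr; auto; lra.
    apply drr; auto. apply thr_pos; lra.
Qed.

Lemma Apeak_dpl M k p : valid_market M -> 0 < p < pmax M ->
  derivable_pt_lim (Apeak M k) p (- k * KK M * Rpower (thr M p) (1 - sigma M) * dthrv M p).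
Proof.
  intros hv hp. apply dpl_loc with (g := fun y => aa M k (thr M y)) (r := Rmin p (pmax M - p)).
  - apply Rmin_pos; lra.
  - intros y hy. apply Rabs_def2 in hy. destruct hy as [h1 h2].
    pose proof (Rmin_l p (pmax M - p)). pose proof (Rmin_r p (pmax M - p)).
    apply Apeak_cf; auto; lra.
  - apply (derivable_pt_lim_comp (thr M) (aa M k)). apply dthr; auto; lra.
    apply daa; auto. apply thr_pos; lra.
Qed.

Lemma inf_approx (E : R -> Prop) p0 : is_inf E p0 -> forall eps, 0 < eps -> exists q, E q /\ q < p0 + eps.
Proof. intros [_ hg] eps he. apply NNPP. intros hn.
  assert (p0 + eps <= p0). { apply hg. intros y hy. apply Rnot_lt_le. intros hlt. apply hn. exists y; auto. }
  lra.
Qed.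

Lemma thr_le M a b : valid_market M -> 0 < a -> a <= b -> thr M a <= thr M b.
Proof. intros hv ha hab. pose proof hv as hv'; vm hv'. rewrite !thr_eq by lra. apply Rle_Rpower_l; [|lra].
  left; apply Rdiv_lt_0_compat; lra. Qed.

Lemma thr_lt2 M a b : valid_market M -> 0 < a -> a < b -> thr M a < thr M b.
Proof. intros hv ha hab. pose proof hv as hv'; vm hv'. rewrite !thr_eq by lra. apply Rlt_Rpower_l; [|lra].
  apply Rdiv_lt_0_compat; lra. Qed.

Lemma F1_le M t : valid_market M -> F1 M t <= al M.
Proof. intros hv; vm hv. unfold F1, al. pose proof (Rp_pos t (1 - sigma M)).
  unfold Rdiv. apply Rmult_le_compat_r. left; apply Rinv_0_lt_compat; lra. lra. Qed.

Lemma lower_bound M k kp : valid_market M -> 0 < k ->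
  exists eps, 0 < eps /\ forall q, feasible M k kp q -> eps <= q.
Proof.
  intros hv hk. pose proof hv as hv'; vm hv'.
  set (t2 := Phimax M / 2).
  pose proof (F2_pos M t2 hv ltac:(unfold t2; lra)). pose proof (al_pos M hv). pose proof (KK_pos M hv).
  exists (Rmin (eta M * k * F2 M t2 / al M) (Rpower t2 (theta M))). split.
  { apply Rmin_pos. apply Rdiv_lt_0_compat; [|assumption]. apply Rmult_lt_0_compat; [apply Rmult_lt_0_compat; lra|assumption]. apply Rp_pos. }
  intros q hq. pose proof (feas_dom M k kp q hv hk hq) as hqd. destruct hq as [_ [hR _]].
  rewrite Rev_cf in hR by auto. unfold rr in hR.
  pose proof (thr_pos M q (proj1 hqd)).
  rewrite (q_thr M q hv (proj1 hqd)). set (t := thr M q) in *.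
  destruct (Rle_dec t t2) as [hle|hgt].
  - apply Rle_trans with (1 := Rmin_l _ _).
    assert (hF2 : F2 M t2 <= F2 M t). { destruct hle as [hl| ->]; [left; apply F2_decr; auto|lra]. }
    assert (hpos : Rpower t (theta M) * F1 M t - eta M * k * F2 M t > 0).
    { apply Rmult_lt_reg_l with (KK M); auto. lra. }
    pose proof (F1_le M t hv). pose proof (Rp_pos t (theta M)).
    assert (Rpower t (theta M) * F1 M t <= Rpower t (theta M) * al M) by (apply Rmult_le_compat_l; lra).
    assert (eta M * k * F2 M t2 <= eta M * k * F2 M t) by (apply Rmult_le_compat_l; [left; apply Rmult_lt_0_compat|]; lra).
    assert (eta M * k * F2 M t2 < Rpower t (theta M) * al M) by lra.
    left. apply Rmult_lt_reg_r with (al M); auto. unfold Rdiv. rewrite Rmult_assoc, Rinv_l by lra. lra.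
  - apply Rle_trans with (1 := Rmin_r _ _). left. apply Rlt_Rpower_l; unfold t2 in *; lra.
Qed.

Lemma p0_range M ka kp p0 : valid_market M -> 0 < ka -> is_inf (feasible M ka kp) p0 -> 0 < p0 < pmax M.
Proof. intros hv hk hi. destruct (lower_bound M ka kp hv hk) as [e [he hb]].
  pose proof (proj2 hi e hb).
  destruct (inf_approx _ p0 hi 1 ltac:(lra)) as [q [hq _]].
  pose proof (proj1 hi q hq). pose proof (feas_dom M ka kp q hv hk hq). lra.
Qed.

Lemma aa_le_C M ka kp p0 : valid_market M -> 0 < ka -> is_inf (feasible M ka kp) p0 ->
  aa M kp (thr M p0) <= C3g M.
Proof. intros hv hk hi. pose proof (p0_range M ka kp p0 hv hk hi) as hp.
  apply Rnot_lt_le. intros hlt.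
  destruct (cont_eps _ _ _ (Apeak_dpl M kp p0 hv hp) (aa M kp (thr M p0) - C3g M) ltac:(lra)) as [del [hd h]].
  destruct (inf_approx _ p0 hi del hd) as [q [hq hql]].
  pose proof (proj1 hi q hq). specialize (h q). rewrite (Apeak_cf M kp p0) in h by auto.
  destruct hq as [_ [_ hA]].
  assert (Rabs (q - p0) < del) by (rewrite Rabs_right; lra).
  specialize (h H0). apply Rabs_def2 in h. lra.
Qed.

Lemma Rev_sign M k p : valid_market M -> 0 < p ->
  exists P, 0 < P /\ KK M * theta M * Rpower (thr M p) (theta M - 1) * hh M k (thr M p) * dthrv M p = P * (k - phi M (thr M p)).
Proof. intros hv hp. pose proof (thr_pos M p hp). rewrite hh_phi by auto.
  pose proof (KK_pos M hv). pose proof (dthrv_pos M p hv). pose proof hv as hv'; vm hv'.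
  exists (KK M * theta M * Rpower (thr M p) (theta M - 1) * (eta M / theta M * Rpower (thr M p) (2 - sigma M - theta M)) * dthrv M p).
  split; [|ring].
  assert (0 < eta M / theta M) by (apply Rdiv_lt_0_compat; lra).
  pose proof (Rp_pos (thr M p) (theta M - 1)). pose proof (Rp_pos (thr M p) (2 - sigma M - theta M)).
  apply Rmult_lt_0_compat; [|assumption]. apply Rmult_lt_0_compat; [|apply Rmult_lt_0_compat; assumption].
  apply Rmult_lt_0_compat; [apply Rmult_lt_0_compat|]; assumption.
Qed.

Lemma case_i_pkg M ka kp : valid_market M -> 0 < ka -> 0 < kp -> ka < phi M (Phimax M) ->
  Rprime_at_p0 M ka kp (fun d => d < 0) ->
  exists t0, 0 < t0 < Phimax M /\ aa M kp t0 = C3g M /\ 0 < rr M ka t0 /\ ka < phi M t0 /\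
    forall q, is_eq_price M ka kp q <-> q = Rpower t0 (theta M).
Proof.
  intros hv hka hkp hphiM [p0 [d [hi [hd hs]]]].
  pose proof (p0_range M ka kp p0 hv hka hi) as hp.
  pose proof (thr_pos M p0 (proj1 hp)). pose proof (thr_lt M p0 hv hp).
  destruct (Rev_sign M ka p0 hv (proj1 hp)) as [P [hP eP]].
  pose proof (uniqueness_limite _ _ _ _ hd (Rev_dpl M ka p0 hv hp)) as hdd. rewrite eP in hdd.
  set (t0 := thr M p0) in *.
  assert (hphi : ka < phi M t0) by nra.
  assert (hr : 0 < rr M ka t0).
  { destruct (inf_approx _ p0 hi 1 ltac:(lra)) as [q [hq _]].
    pose proof (proj1 hi q hq). pose proof (feas_dom M ka kp q hv hka hq) as hqd.
    destruct hq as [_ [hR _]]. rewrite Rev_cf in hR by auto.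
    pose proof (thr_le M p0 q hv (proj1 hp) H1). fold t0 in H2.
    pose proof (thr_lt M q hv hqd).
    destruct H2 as [hl|he]; [|rewrite <- he in hR; auto].
    pose proof (rr_decr M ka t0 (thr M q) hv ltac:(lra) hl). 
    assert (rr M ka (thr M q) < rr M ka t0). { apply H2. intros c hc. apply (phi_GEN M ka t0 c); auto; lra. }
    lra. }
  assert (hA : aa M kp t0 = C3g M).
  { pose proof (aa_le_C M ka kp p0 hv hka hi) as hle. fold t0 in hle.
    destruct hle as [hlt|]; auto. exfalso.
    destruct (cont_eps _ _ _ (Apeak_dpl M kp p0 hv hp) (C3g M - aa M kp t0) ltac:(lra)) as [d1 [hd1 h1]].
    destruct (cont_eps _ _ _ (Rev_dpl M ka p0 hv hp) (rr M ka t0) hr) as [d2 [hd2 h2]].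
    set (e := Rmin (Rmin d1 d2) p0 / 2).
    assert (he : 0 < e /\ e < d1 /\ e < d2 /\ e < p0).
    { unfold e. pose proof (Rmin_l (Rmin d1 d2) p0). pose proof (Rmin_r (Rmin d1 d2) p0).
      pose proof (Rmin_l d1 d2). pose proof (Rmin_r d1 d2).
      assert (0 < Rmin (Rmin d1 d2) p0) by (apply Rmin_pos; [apply Rmin_pos|]; lra). lra. }
    assert (hab : Rabs (p0 - e - p0) = e) by (rewrite Rabs_left; lra).
    specialize (h1 (p0 - e) ltac:(lra)). specialize (h2 (p0 - e) ltac:(lra)).
    rewrite (Apeak_cf M kp p0) in h1 by auto. rewrite (Rev_cf M ka p0) in h2 by auto. fold t0 in h1, h2.
    apply Rabs_def2 in h1. apply Rabs_def2 in h2.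
    assert (feasible M ka kp (p0 - e)) by (split; [lra|split; lra]).
    pose proof (proj1 hi _ H1). lra. }
  exists t0. split; [lra|]. split; auto. split; auto. split; auto.
  apply L_sat; auto; lra.
Qed.

Lemma case_ii_pkg M ka kp : valid_market M -> 0 < ka -> 0 < kp ->
  Rprime_at_p0 M ka kp (fun d => 0 < d) ->
  exists t0, 0 < t0 < Phimax M /\ aa M kp t0 <= C3g M /\ phi M t0 < ka /\
    forall t1, t0 < t1 < Phimax M -> (forall c, t0 < c < t1 -> phi M c < ka) -> 0 < rr M ka t1.
Proof.
  intros hv hka hkp [p0 [d [hi [hd hs]]]].
  pose proof (p0_range M ka kp p0 hv hka hi) as hp.
  pose proof (thr_pos M p0 (proj1 hp)). pose proof (thr_lt M p0 hv hp).
  destruct (Rev_sign M ka p0 hv (proj1 hp)) as [P [hP eP]].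
  pose proof (uniqueness_limite _ _ _ _ hd (Rev_dpl M ka p0 hv hp)) as hdd. rewrite eP in hdd.
  pose proof (aa_le_C M ka kp p0 hv hka hi) as hle.
  set (t0 := thr M p0) in *.
  exists t0. split; [lra|]. split; auto. split; [nra|].
  intros t1 hT1 hc.
  assert (hp0 : p0 = Rpower t0 (theta M)) by (apply q_thr; auto; lra).
  assert (hlt : p0 < Rpower t1 (theta M)).
  { rewrite hp0. pose proof hv as hv'; vm hv'. apply Rlt_Rpower_l; lra. }
  destruct (inf_approx _ p0 hi (Rpower t1 (theta M) - p0) ltac:(lra)) as [q [hq hql]].
  pose proof (proj1 hi q hq). pose proof (feas_dom M ka kp q hv hka hq) as hqd.
  destruct hq as [_ [hR _]]. rewrite Rev_cf in hR by auto.
  pose proof (thr_le M p0 q hv (proj1 hp) H1). fold t0 in H2.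
  assert (htq : thr M q < t1).
  { rewrite <- (thr_Rp M t1 hv) by lra. apply thr_lt2; auto; lra. }
  assert (rr M ka (thr M q) < rr M ka t1).
  { apply rr_incr; auto. apply thr_pos; lra. intros c hc'. apply hc; lra. }
  lra.
Qed.

Lemma near_gt f x l c : derivable_pt_lim f x l -> c < f x ->
  exists del, 0 < del /\ forall y, Rabs (y - x) < del -> c < f y.
Proof. intros hd h. destruct (cont_eps f x l hd (f x - c) ltac:(lra)) as [d [hd0 hy]].
  exists d; split; auto. intros y hy'. specialize (hy y hy'). apply Rabs_def2 in hy. lra. Qed.

Lemma near_lt f x l c : derivable_pt_lim f x l -> f x < c ->
  exists del, 0 < del /\ forall y, Rabs (y - x) < del -> f y < c.
Proof. intros hd h. destruct (cont_eps f x l hd (c - f x) ltac:(lra)) as [d [hd0 hy]].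
  exists d; split; auto. intros y hy'. specialize (hy y hy'). apply Rabs_def2 in hy. lra. Qed.

Lemma dpl_id x : derivable_pt_lim (fun y => y) x 1.
Proof. apply derivable_pt_lim_id. Qed.

Lemma pstar_eq M k kp p1 : (forall q, is_eq_price M k kp q <-> q = p1) -> pstar M k kp = p1.
Proof. intros h. unfold pstar.
  destruct (epsilon_spec (inhabits 0) (is_eq_price M k kp)) as [].
  - exists p1. apply h; reflexivity.
  - apply h. apply (epsilon_spec (inhabits 0) (is_eq_price M k kp)). exists p1; apply h; reflexivity.
Qed.

Definition Xc M k := Rpower (Phimax M) (2 - sigma M) - (2 - sigma M) * C3g M / (k * KK M).
Definition tC M k := Rpower (Xc M k) (1 / (2 - sigma M)).

Lemma dXc M k : valid_market M -> 0 < k ->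
  derivable_pt_lim (Xc M) k ((2 - sigma M) * C3g M / (k * k * KK M)).
Proof. intros hv hk. pose proof (KK_pos M hv). vm hv. apply is_derive_Reals. unfold Xc. auto_derive.
  - nra.
  - field. split; lra.
Qed.

Definition dtCv M k := 1 / (2 - sigma M) * Rpower (Xc M k) (1 / (2 - sigma M) - 1) * ((2 - sigma M) * C3g M / (k * k * KK M)).

Lemma dtC M k : valid_market M -> 0 < k -> 0 < Xc M k -> derivable_pt_lim (tC M) k (dtCv M k).
Proof. intros hv hk hX. unfold tC, dtCv.
  apply (derivable_pt_lim_comp (Xc M) (fun y => Rpower y (1 / (2 - sigma M)))).
  apply dXc; auto. apply dpl_Rp; auto.
Qed.

Lemma dtCv_pos M k : valid_market M -> 0 < k -> 0 < dtCv M k.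
Proof. intros hv hk. pose proof (KK_pos M hv). vm hv. unfold dtCv.
  apply Rmult_lt_0_compat. apply Rmult_lt_0_compat. apply Rdiv_lt_0_compat; lra. apply Rp_pos.
  apply Rdiv_lt_0_compat. apply Rmult_lt_0_compat; lra. apply Rmult_lt_0_compat; nra.
Qed.

Lemma tC_pow M k : valid_market M -> 0 < Xc M k -> Rpower (tC M k) (2 - sigma M) = Xc M k.
Proof. intros hv hX. vm hv. unfold tC. rewrite Rpower_mult. rewrite (Rp_ext _ _ 1) by (field; lra).
  apply Rpower_1; auto. Qed.

Lemma tC_aa M k : valid_market M -> 0 < k -> 0 < Xc M k -> aa M k (tC M k) = C3g M.
Proof. intros hv hk hX. pose proof (KK_pos M hv). unfold aa, F2. rewrite tC_pow by auto.
  vm hv. unfold Xc. field. split; lra. Qed.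

Lemma tC_lt M k : valid_market M -> 0 < k -> 0 < Xc M k -> tC M k < Phimax M.
Proof. intros hv hk hX. pose proof (KK_pos M hv). pose proof hv as hv'. vm hv'.
  assert (Xc M k < Rpower (Phimax M) (2 - sigma M)).
  { unfold Xc. assert (0 < (2 - sigma M) * C3g M / (k * KK M)).
    apply Rdiv_lt_0_compat; apply Rmult_lt_0_compat; lra. lra. }
  assert (Phimax M = Rpower (Rpower (Phimax M) (2 - sigma M)) (1 / (2 - sigma M))) as ->.
  { rewrite Rpower_mult, (Rp_ext _ _ 1) by (field; lra). rewrite Rpower_1; auto. }
  unfold tC. apply Rlt_Rpower_l. apply Rdiv_lt_0_compat; lra. lra.
Qed.

Lemma tC_t0 M k t0 : valid_market M -> 0 < k -> 0 < t0 -> aa M k t0 = C3g M ->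
  Xc M k = Rpower t0 (2 - sigma M) /\ tC M k = t0.
Proof. intros hv hk ht hA. pose proof (KK_pos M hv). pose proof hv as hv'. vm hv'.
  assert (e : Xc M k = Rpower t0 (2 - sigma M)).
  { unfold Xc. rewrite <- hA. unfold aa, F2. field. split; lra. }
  split; auto. unfold tC. rewrite e, Rpower_mult, (Rp_ext _ _ 1) by (field; lra). apply Rpower_1; auto.
Qed.

Lemma dpl_sub (f g : R -> R) x a b : derivable_pt_lim f x a -> derivable_pt_lim g x b ->
  derivable_pt_lim (fun y => f y - g y) x (a - b).
Proof. intros. apply (derivable_pt_lim_minus f g); auto. Qed.

Lemma dpl_add (f g : R -> R) x a b : derivable_pt_lim f x a -> derivable_pt_lim g x b ->
  derivable_pt_lim (fun y => f y + g y) x (a + b).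
Proof. intros. apply (derivable_pt_lim_plus f g); auto. Qed.

Lemma dpl_cst c x : derivable_pt_lim (fun _ => c) x 0.
Proof. apply derivable_pt_lim_const. Qed.

Lemma min3 a b c : 0 < a -> 0 < b -> 0 < c -> exists d, 0 < d /\ d <= a /\ d <= b /\ d <= c.
Proof. intros. exists (Rmin a (Rmin b c)). pose proof (Rmin_l a (Rmin b c)). pose proof (Rmin_r a (Rmin b c)).
  pose proof (Rmin_l b c). pose proof (Rmin_r b c). split; [repeat apply Rmin_pos; auto|lra]. Qed.

Lemma part_i M ka kp : valid_market M -> 0 < ka -> 0 < kp -> ka < phi M (Phimax M) ->
  Rprime_at_p0 M ka kp (fun d => d < 0) ->
     (forall p, is_eq_price M ka kp p <-> p = pstar M ka kp) /\
     Apeak M kp (pstar M ka kp) = C3g M /\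
     (exists dp, 0 < dp /\
        derivable_pt_lim (fun k => pstar M ka k) kp dp /\
        (forall Phi, derivable_pt_lim (fun k => net_utility M Phi (pstar M ka k)) kp (- dp))) /\
     (exists dr, dr < 0 /\ derivable_pt_lim (fun k => Rev M ka (pstar M ka k)) kp dr) /\
     (exists du, du < 0 /\ derivable_pt_lim (fun k => surplus M (pstar M ka k)) kp du) /\
     (exists dw, dw < 0 /\ derivable_pt_lim (fun k => welfare M ka (pstar M ka k)) kp dw).
Proof.
  intros hv hka hkp hphiM hR.
  destruct (case_i_pkg M ka kp hv hka hkp hphiM hR) as [t0 [hT0 [hA [hr [hphi hu]]]]].
  pose proof (pstar_eq M ka kp _ hu) as hps.
  destruct (tC_t0 M kp t0 hv hkp (proj1 hT0) hA) as [hX htC].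
  pose proof (Rp_pos t0 (2 - sigma M)) as hXp. rewrite <- hX in hXp.
  pose proof (dtC M kp hv hkp hXp) as hdtC.
  assert (hdr : derivable_pt_lim (fun k => rr M ka (tC M k)) kp
     (KK M * theta M * Rpower t0 (theta M - 1) * hh M ka t0 * dtCv M kp)).
  { apply (derivable_pt_lim_comp (tC M) (rr M ka)); auto. rewrite htC. apply drr; auto; lra. }
  assert (hdphi : derivable_pt_lim (fun k => phi M (tC M k)) kp (dphi M t0 * dtCv M kp)).
  { apply (derivable_pt_lim_comp (tC M) (phi M)); auto. rewrite htC. apply dphi_lim; auto; lra. }
  assert (hdG : derivable_pt_lim (fun k => Rpower (tC M k) (theta M)) kp
     (theta M * Rpower t0 (theta M - 1) * dtCv M kp)).
  { apply (derivable_pt_lim_comp (tC M) (fun y => Rpower y (theta M))); auto. rewrite htC. apply dpl_Rp; lra. }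
  assert (hds : derivable_pt_lim (fun k => ss M (tC M k)) kp
     (- KK M * theta M * Rpower t0 (theta M - 1) * F1 M t0 * dtCv M kp)).
  { apply (derivable_pt_lim_comp (tC M) (ss M)); auto. rewrite htC. apply dss; auto; lra. }
  destruct (near_gt _ _ _ 0 (dXc M kp hv hkp) hXp) as [d1 [hd1 h1]].
  destruct (near_gt _ _ _ 0 hdr ltac:(cbv beta; rewrite htC; exact hr)) as [d2 [hd2 h2]].
  destruct (near_gt _ _ _ ka hdphi ltac:(cbv beta; rewrite htC; exact hphi)) as [d3 [hd3 h3]].
  destruct (min3 d1 d2 (Rmin d3 kp) hd1 hd2 ltac:(apply Rmin_pos; lra)) as [del [hdel [hdl1 [hdl2 hdl3]]]].
  pose proof (Rmin_l d3 kp). pose proof (Rmin_r d3 kp).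
  assert (hloc : forall k, Rabs (k - kp) < del ->
     0 < k /\ 0 < tC M k < Phimax M /\ pstar M ka k = Rpower (tC M k) (theta M)).
  { intros k hk. assert (hk0 : 0 < k) by (apply Rabs_def2 in hk; lra).
    specialize (h1 k ltac:(lra)). specialize (h2 k ltac:(lra)). specialize (h3 k ltac:(lra)).
    pose proof (tC_lt M k hv hk0 h1). pose proof (Rp_pos (Xc M k) (1 / (2 - sigma M))) as htp. fold (tC M k) in htp.
    split; [exact hk0|]. split; [split; lra|].
    apply pstar_eq. apply L_sat; auto; try (split; lra); try lra. apply tC_aa; auto. }
  assert (hdp : 0 < theta M * Rpower t0 (theta M - 1) * dtCv M kp).
  { pose proof hv as hv'; vm hv'. pose proof (dtCv_pos M kp hv hkp). pose proof (Rp_pos t0 (theta M - 1)).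
    apply Rmult_lt_0_compat; [apply Rmult_lt_0_compat|]; lra. }
  assert (hGloc : forall k, Rabs (k - kp) < del -> pstar M ka k = Rpower (tC M k) (theta M)).
  { intros k hk. apply hloc, hk. }
  assert (hRloc : forall k, Rabs (k - kp) < del -> Rev M ka (pstar M ka k) = rr M ka (tC M k)).
  { intros k hk. destruct (hloc k hk) as [_ [htk ->]]. rewrite Rev_cf. rewrite thr_Rp; auto; lra.
    auto. split; [apply Rp_pos|apply Rp_lt_pmax; auto]. }
  assert (hSloc : forall k, Rabs (k - kp) < del -> surplus M (pstar M ka k) = ss M (tC M k)).
  { intros k hk. destruct (hloc k hk) as [_ [htk ->]]. rewrite surplus_cf. rewrite thr_Rp; auto; lra.
    auto. split; [apply Rp_pos|apply Rp_lt_pmax; auto]. }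
  assert (hsign_r : KK M * theta M * Rpower t0 (theta M - 1) * hh M ka t0 * dtCv M kp < 0).
  { rewrite hh_phi by (auto; lra). pose proof hv as hv'; vm hv'. pose proof (dtCv_pos M kp hv hkp).
    pose proof (Rp_pos t0 (theta M - 1)). pose proof (Rp_pos t0 (2 - sigma M - theta M)). pose proof (KK_pos M hv).
    assert (0 < eta M / theta M) by (apply Rdiv_lt_0_compat; lra).
    assert (0 < KK M * theta M * Rpower t0 (theta M - 1) * (eta M / theta M * Rpower t0 (2 - sigma M - theta M)) * dtCv M kp).
    { apply Rmult_lt_0_compat; [|lra]. apply Rmult_lt_0_compat; [|apply Rmult_lt_0_compat; lra].
      apply Rmult_lt_0_compat; [apply Rmult_lt_0_compat|]; lra. }
    nra. }
  assert (hsign_s : - KK M * theta M * Rpower t0 (theta M - 1) * F1 M t0 * dtCv M kp < 0).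
  { pose proof hv as hv'; vm hv'. pose proof (dtCv_pos M kp hv hkp). pose proof (F1_pos M t0 hv hT0).
    pose proof (Rp_pos t0 (theta M - 1)). pose proof (KK_pos M hv).
    assert (0 < KK M * theta M * Rpower t0 (theta M - 1) * F1 M t0 * dtCv M kp).
    { apply Rmult_lt_0_compat; [|lra]. apply Rmult_lt_0_compat; [|lra].
      apply Rmult_lt_0_compat; [apply Rmult_lt_0_compat|]; lra. }
    lra. }
  split; [|split; [|split; [|split; [|split]]]].
  - intros p. rewrite hu, hps. tauto.
  - rewrite hps, Apeak_cf, thr_Rp; auto; try lra. split; [apply Rp_pos|apply Rp_lt_pmax; auto].
  - exists (theta M * Rpower t0 (theta M - 1) * dtCv M kp). split; auto. split.
    + apply dpl_loc with (g := fun k => Rpower (tC M k) (theta M)) (r := del); auto.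
    + intros Phi. apply dpl_loc with (g := fun k => rpow Phi (theta M) - Rpower (tC M k) (theta M)) (r := del); auto.
      { intros k hk. unfold net_utility. rewrite hGloc; auto. }
      replace (- (theta M * Rpower t0 (theta M - 1) * dtCv M kp)) with (0 - theta M * Rpower t0 (theta M - 1) * dtCv M kp) by ring.
      apply dpl_sub; auto. apply dpl_cst.
  - eexists. split; [exact hsign_r|]. apply dpl_loc with (g := fun k => rr M ka (tC M k)) (r := del); auto.
  - eexists. split; [exact hsign_s|]. apply dpl_loc with (g := fun k => ss M (tC M k)) (r := del); auto.
  - eexists. split; [|apply dpl_loc with (g := fun k => ss M (tC M k) + rr M ka (tC M k)) (r := del); auto].
    2: { intros k hk. unfold welfare. rewrite hSloc, hRloc; auto. }
    2: { apply dpl_add; eauto. }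
    lra.
Qed.

Definition te M := Rmin (tm M) (Phimax M).
Definition T M k := epsilon (inhabits 0) (fun t => 0 < t <= te M /\ phi M t = k).

Lemma te_pos M : valid_market M -> 0 < te M.
Proof. intros hv. pose proof (tm_pos M). pose proof hv as hv'; vm hv'. unfold te. apply Rmin_pos; lra. Qed.

Lemma phi_cont M x : valid_market M -> 0 < x -> continuity_pt (phi M) x.
Proof. intros hv hx. apply derivable_continuous_pt. exists (dphi M x). apply dphi_lim; auto. Qed.

Lemma phi_inj M s s' : valid_market M -> 0 < s <= te M -> 0 < s' <= te M -> phi M s = phi M s' -> s = s'.
Proof. intros hv hs hs' he. pose proof (Rmin_l (tm M) (Phimax M)). fold (te M) in H.
  destruct (Rtotal_order s s') as [h|[h|h]]; auto.
  - pose proof (phi_M1 M s s' hv ltac:(lra) h ltac:(lra)). lra.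
  - pose proof (phi_M1 M s' s hv ltac:(lra) h ltac:(lra)). lra.
Qed.

Lemma T_spec M t0 y : valid_market M -> 0 < t0 < te M -> phi M t0 <= y <= phi M (te M) ->
  (0 < T M y <= te M /\ phi M (T M y) = y) /\ t0 <= T M y.
Proof.
  intros hv ht0 hy. pose proof (Rmin_l (tm M) (Phimax M)). fold (te M) in H.
  destruct (f_interv_is_interv (phi M) t0 (te M) y ltac:(lra) hy) as [x [hx hxe]].
  { intros a ha. apply phi_cont; auto; lra. }
  assert (hs : 0 < T M y <= te M /\ phi M (T M y) = y).
  { unfold T. apply epsilon_spec. exists x. split; [split; lra|auto]. }
  split; auto. apply Rnot_lt_le. intros hlt.
  pose proof (phi_M1 M (T M y) t0 hv ltac:(lra) hlt ltac:(lra)). lra.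
Qed.

Lemma T_at M s : valid_market M -> 0 < s <= te M -> T M (phi M s) = s.
Proof. intros hv hs. assert (h : 0 < T M (phi M s) <= te M /\ phi M (T M (phi M s)) = phi M s).
  { unfold T. apply epsilon_spec. exists s. split; auto. }
  apply (phi_inj M); tauto.
Qed.

Lemma T_deriv M t0 k : valid_market M -> 0 < t0 < te M -> phi M t0 < k < phi M (te M) ->
  derivable_pt_lim (T M) k (1 / dphi M (T M k)).
Proof.
  intros hv ht0 hk. pose proof (Rmin_l (tm M) (Phimax M)). fold (te M) in H.
  pose proof (te_pos M hv).
  assert (hincr : forall x y, t0 <= x -> x < y -> y <= te M -> phi M x < phi M y).
  { intros x y hx hxy hy. apply phi_M1; auto; lra. }
  assert (hcomp : forall x, phi M t0 <= x -> x <= phi M (te M) -> comp (phi M) (T M) x = id x).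
  { intros x h1 h2. unfold comp, id. apply (T_spec M t0 x hv ht0); lra. }
  assert (hwf : forall x, phi M t0 <= x -> x <= phi M (te M) -> t0 <= T M x <= te M).
  { intros x h1 h2. destruct (T_spec M t0 x hv ht0 ltac:(lra)) as [[[_ a] _] b]. lra. }
  assert (hcont : continuity_pt (T M) k).
  { apply (continuity_pt_recip_interv (phi M) (T M) t0 (te M)); auto; try lra.
    intros a ha. apply phi_cont; auto; lra. }
  assert (hT0 : T M (phi M t0) = t0) by (apply T_at; auto; lra).
  assert (hT1 : T M (phi M (te M)) = te M) by (apply T_at; auto; lra).
  assert (Prf : forall a, T M (phi M t0) <= a <= T M (phi M (te M)) -> derivable_pt (phi M) a).
  { intros a ha. exists (dphi M a). apply dphi_lim; auto. lra. }
  destruct (T_spec M t0 k hv ht0 ltac:(lra)) as [[hTk hpk] hTk0].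
  assert (hne : T M k <> te M). { intros he. rewrite he in hpk. lra. }
  assert (hincr2 : T M (phi M t0) <= T M k <= T M (phi M (te M))) by lra.
  pose proof (derivable_pt_lim_recip_interv (phi M) (T M) (phi M t0) (phi M (te M)) k Prf hcont
     ltac:(lra) ltac:(lra) hincr2) as hd.
  assert (e : derive_pt (phi M) (T M k) (Prf (T M k) hincr2) = dphi M (T M k)).
  { apply derive_pt_eq_0. apply dphi_lim; auto; lra. }
  rewrite e in hd. apply hd.
  - intros x hx. apply hcomp; lra.
  - pose proof (dphi_pos M (T M k) hv ltac:(lra) ltac:(lra)). lra.
Qed.

Lemma rr_argmax M k s t : valid_market M -> 0 < s <= tm M -> s < Phimax M -> phi M s = k ->
  k < phi M (Phimax M) -> 0 < t < Phimax M -> rr M k t <= rr M k s.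
Proof. intros hv hs hsP hphi hphiM ht.
  destruct (Rtotal_order t s) as [hl|[he|hg]].
  - left. apply rr_incr; auto; try lra. intros c hc. rewrite <- hphi. apply phi_M1; auto; lra.
  - subst; lra.
  - left. apply rr_decr; auto; try lra. intros c hc. apply (phi_GEN M k s c); auto; lra.
Qed.

Lemma dF2 M t : valid_market M -> 0 < t -> derivable_pt_lim (F2 M) t (- Rpower t (1 - sigma M)).
Proof. intros hv ht. vm hv. apply is_derive_Reals. unfold F2. auto_derive.
  - apply exd_Rp; lra.
  - rewrite Derive_Rp by lra. rewrite (Rp_ext t (2 - sigma M - 1) (1 - sigma M)) by ring. field. lra.
Qed.

Lemma drr_k M t k : derivable_pt_lim (fun kap => rr M kap t) k (- (KK M * eta M * F2 M t)).
Proof. apply is_derive_Reals. unfold rr. auto_derive; auto. ring. Qed.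

Lemma dpl_scal c (f : R -> R) x l : derivable_pt_lim f x l -> derivable_pt_lim (fun y => c * f y) x (c * l).
Proof. intros h. apply (derivable_pt_lim_scal f c x l h). Qed.

Lemma dpl_mul (f g : R -> R) x a b : derivable_pt_lim f x a -> derivable_pt_lim g x b ->
  derivable_pt_lim (fun y => f y * g y) x (a * g x + f x * b).
Proof. intros. apply (derivable_pt_lim_mult f g); auto. Qed.

Lemma part_ii M ka kp : valid_market M -> 0 < ka -> 0 < kp -> ka < phi M (Phimax M) ->
  Rprime_at_p0 M ka kp (fun d => 0 < d) ->
     (forall p, is_eq_price M ka kp p <-> p = pstar M ka kp) /\
     Apeak M kp (pstar M ka kp) <> C3g M /\
     (exists dp, 0 < dp /\
        derivable_pt_lim (fun k => pstar M k kp) ka dp /\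
        (forall Phi, derivable_pt_lim (fun k => net_utility M Phi (pstar M k kp)) ka (- dp))) /\
     (exists dr, dr < 0 /\ derivable_pt_lim (fun k => Rev M k (pstar M k kp)) ka dr) /\
     (exists du, du < 0 /\ derivable_pt_lim (fun k => surplus M (pstar M k kp)) ka du) /\
     (exists dw, dw < 0 /\ derivable_pt_lim (fun k => welfare M k (pstar M k kp)) ka dw).
Proof.
  intros hv hka hkp hphiM hR.
  destruct (case_ii_pkg M ka kp hv hka hkp hR) as [t0 [hT0 [haa [hph hcrit]]]].
  pose proof (tm_pos M) as htm. pose proof (te_pos M hv) as hte.
  pose proof (Rmin_l (tm M) (Phimax M)) as hte1. pose proof (Rmin_r (tm M) (Phimax M)) as hte2.
  fold (te M) in hte1, hte2.
  assert (ht0m : t0 < tm M).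
  { apply Rnot_le_lt. intros hle. pose proof (phi_M2 M (tm M) t0 hv (Rle_refl _)).
    destruct hle as [hlt| <-].
    - pose proof (phi_M2 M t0 (Phimax M) hv ltac:(lra) ltac:(lra)). lra.
    - pose proof (phi_M2 M (tm M) (Phimax M) hv ltac:(lra) ltac:(lra)). lra. }
  assert (ht0e : t0 < te M).
  { unfold te. apply Rmin_glb_lt; lra. }
  assert (hphte : ka < phi M (te M)).
  { unfold te. destruct (Rle_dec (tm M) (Phimax M)) as [h|h].
    - rewrite Rmin_left by auto. destruct h as [h| ->]; auto.
      pose proof (phi_M2 M (tm M) (Phimax M) hv (Rle_refl _) h). lra.
    - rewrite Rmin_right by lra. auto. }
  destruct (T_spec M t0 ka hv ltac:(lra) ltac:(lra)) as [[hts hpts] hts0].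
  set (ts := T M ka) in *.
  assert (htsP : ts < Phimax M). { destruct (Req_dec ts (Phimax M)) as [e|]; [|lra]. rewrite e in hpts. lra. }
  assert (htst0 : t0 < ts). { destruct hts0 as [|e]; auto. rewrite <- e in hpts. lra. }
  assert (htse : ts < te M). { destruct (Req_dec ts (te M)) as [e|]; [|lra]. rewrite e in hpts. lra. }
  assert (hrts : 0 < rr M ka ts).
  { apply hcrit. lra. intros c hc. rewrite <- hpts. apply phi_M1; auto; lra. }
  pose proof (T_deriv M t0 ka hv ltac:(lra) ltac:(lra)) as hdT. fold ts in hdT.
  set (dT := 1 / dphi M ts) in *.
  assert (hdTp : 0 < dT). { unfold dT. apply Rdiv_lt_0_compat; [lra|]. apply dphi_pos; auto; lra. }
  destruct (near_gt _ _ _ 0 (drr_k M ts ka) hrts) as [d1 [hd1 h1]].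
  set (d0 := Rmin (Rmin (ka - phi M t0) (phi M (te M) - ka)) (Rmin (phi M (Phimax M) - ka) ka)).
  assert (hd0 : 0 < d0) by (unfold d0; repeat apply Rmin_pos; lra).
  assert (hd0' : d0 <= ka - phi M t0 /\ d0 <= phi M (te M) - ka /\ d0 <= phi M (Phimax M) - ka /\ d0 <= ka).
  { unfold d0. pose proof (Rmin_l (Rmin (ka - phi M t0) (phi M (te M) - ka)) (Rmin (phi M (Phimax M) - ka) ka)).
    pose proof (Rmin_r (Rmin (ka - phi M t0) (phi M (te M) - ka)) (Rmin (phi M (Phimax M) - ka) ka)).
    pose proof (Rmin_l (ka - phi M t0) (phi M (te M) - ka)). pose proof (Rmin_r (ka - phi M t0) (phi M (te M) - ka)).
    pose proof (Rmin_l (phi M (Phimax M) - ka) ka). pose proof (Rmin_r (phi M (Phimax M) - ka) ka). lra. }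
  set (del := Rmin d0 d1).
  assert (hdel : 0 < del) by (apply Rmin_pos; auto).
  pose proof (Rmin_l d0 d1) as hdl0. pose proof (Rmin_r d0 d1) as hdl1. fold del in hdl0, hdl1.
  assert (hloc : forall k, Rabs (k - ka) < del ->
     0 < T M k < Phimax M /\ pstar M k kp = Rpower (T M k) (theta M)).
  { intros k hk. pose proof hk as hk'. apply Rabs_def2 in hk'.
    destruct (T_spec M t0 k hv ltac:(lra) ltac:(lra)) as [[hTk hpTk] hTk0].
    assert (hTkP : T M k < Phimax M). { destruct (Req_dec (T M k) (Phimax M)) as [e|]; [|lra]. rewrite e in hpTk. lra. }
    split; [split; lra|].
    apply pstar_eq. apply L_unsat; auto; try (split; lra); try lra.
    - assert (rr M k ts <= rr M k (T M k)).
      { apply rr_argmax; auto; try (split; lra); try lra. }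
      specialize (h1 k ltac:(lra)). cbv beta in h1. lra.
    - destruct hTk0 as [hl|e]; [|rewrite <- e; auto].
      pose proof (aa_decr M kp t0 (T M k) hv hkp ltac:(lra)). lra. }
  assert (hps : pstar M ka kp = Rpower ts (theta M)).
  { destruct (hloc ka ltac:(rewrite Rminus_eq_0, Rabs_R0; lra)) as [_ e]. exact e. }
  assert (hdG : derivable_pt_lim (fun k => Rpower (T M k) (theta M)) ka (theta M * Rpower ts (theta M - 1) * dT)).
  { apply (derivable_pt_lim_comp (T M) (fun y => Rpower y (theta M))); auto. apply dpl_Rp; lra. }
  assert (hdr : derivable_pt_lim (fun k => rr M ka (T M k)) ka (KK M * theta M * Rpower ts (theta M - 1) * hh M ka ts * dT)).
  { apply (derivable_pt_lim_comp (T M) (rr M ka)); auto. apply drr; auto; lra. }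
  assert (hdF : derivable_pt_lim (fun k => F2 M (T M k)) ka (- Rpower ts (1 - sigma M) * dT)).
  { apply (derivable_pt_lim_comp (T M) (F2 M)); auto. apply dF2; auto; lra. }
  assert (hds : derivable_pt_lim (fun k => ss M (T M k)) ka (- KK M * theta M * Rpower ts (theta M - 1) * F1 M ts * dT)).
  { apply (derivable_pt_lim_comp (T M) (ss M)); auto. apply dss; auto; lra. }
  set (DR := KK M * theta M * Rpower ts (theta M - 1) * hh M ka ts * dT -
        KK M * eta M * (1 * F2 M ts + (ka - ka) * (- Rpower ts (1 - sigma M) * dT))).
  assert (hDR : derivable_pt_lim (fun k => rr M ka (T M k) - KK M * eta M * ((k - ka) * F2 M (T M k))) ka DR).
  { unfold DR. apply dpl_sub; auto. apply dpl_scal. fold ts.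
    apply (dpl_mul (fun k => k - ka) (fun k => F2 M (T M k))); auto.
    replace 1 with (1 - 0) by ring. apply dpl_sub. apply derivable_pt_lim_id. apply dpl_cst. }
  assert (hDRn : DR < 0).
  { unfold DR. rewrite hh_phi by (auto; lra). rewrite hpts. pose proof (F2_pos M ts hv ltac:(lra)).
    pose proof (KK_pos M hv). pose proof hv as hv'; vm hv'. 
    assert (0 < KK M * eta M) by (apply Rmult_lt_0_compat; lra).
    replace (ka - ka) with 0 by ring. nra. }
  assert (hdp : 0 < theta M * Rpower ts (theta M - 1) * dT).
  { pose proof hv as hv'; vm hv'. pose proof (Rp_pos ts (theta M - 1)).
    apply Rmult_lt_0_compat; [apply Rmult_lt_0_compat|]; lra. }
  assert (hsign_s : - KK M * theta M * Rpower ts (theta M - 1) * F1 M ts * dT < 0).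
  { pose proof hv as hv'; vm hv'. pose proof (F1_pos M ts hv ltac:(lra)).
    pose proof (Rp_pos ts (theta M - 1)). pose proof (KK_pos M hv).
    assert (0 < KK M * theta M * Rpower ts (theta M - 1) * F1 M ts * dT).
    { apply Rmult_lt_0_compat; [|lra]. apply Rmult_lt_0_compat; [|lra].
      apply Rmult_lt_0_compat; [apply Rmult_lt_0_compat|]; lra. }
    lra. }
  assert (hRloc : forall k, Rabs (k - ka) < del -> Rev M k (pstar M k kp) = rr M ka (T M k) - KK M * eta M * ((k - ka) * F2 M (T M k))).
  { intros k hk. destruct (hloc k hk) as [htk ->]. rewrite Rev_cf. rewrite thr_Rp; auto; try lra.
    unfold rr; ring. auto. split; [apply Rp_pos|apply Rp_lt_pmax; auto]. }
  assert (hSloc : forall k, Rabs (k - ka) < del -> surplus M (pstar M k kp) = ss M (T M k)).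
  { intros k hk. destruct (hloc k hk) as [htk ->]. rewrite surplus_cf. rewrite thr_Rp; auto; lra.
    auto. split; [apply Rp_pos|apply Rp_lt_pmax; auto]. }
  assert (hGloc : forall k, Rabs (k - ka) < del -> pstar M k kp = Rpower (T M k) (theta M)).
  { intros k hk. apply hloc, hk. }
  assert (hu : forall q, is_eq_price M ka kp q <-> q = Rpower ts (theta M)).
  { apply L_unsat; auto; try (split; lra); try lra.
    destruct hts0 as [hl|e]; [|rewrite <- e; auto].
    pose proof (aa_decr M kp t0 ts hv hkp ltac:(lra)). lra. }
  split; [|split; [|split; [|split; [|split]]]].
  - intros p. rewrite hu, hps. tauto.
  - rewrite hps, Apeak_cf, thr_Rp; auto; try lra.
    + pose proof (aa_decr M kp t0 ts hv hkp ltac:(lra)). lra.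
    + split; [apply Rp_pos|apply Rp_lt_pmax; auto; lra].
  - exists (theta M * Rpower ts (theta M - 1) * dT). split; auto. split.
    + apply dpl_loc with (g := fun k => Rpower (T M k) (theta M)) (r := del); auto.
    + intros Phi. apply dpl_loc with (g := fun k => rpow Phi (theta M) - Rpower (T M k) (theta M)) (r := del); auto.
      { intros k hk. unfold net_utility. rewrite hGloc; auto. }
      replace (- (theta M * Rpower ts (theta M - 1) * dT)) with (0 - theta M * Rpower ts (theta M - 1) * dT) by ring.
      apply dpl_sub; auto. apply dpl_cst.
  - exists DR. split; auto. apply dpl_loc with (2 := hRloc); auto.
  - eexists. split; [exact hsign_s|]. apply dpl_loc with (g := fun k => ss M (T M k)) (r := del); auto.
  - exists (- KK M * theta M * Rpower ts (theta M - 1) * F1 M ts * dT + DR). split; [lra|].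
    apply dpl_loc with (g := fun k => ss M (T M k) + (rr M ka (T M k) - KK M * eta M * ((k - ka) * F2 M (T M k)))) (r := del); auto.
    { intros k hk. unfold welfare. rewrite hSloc, hRloc; auto. }
    apply dpl_add; auto.
Qed.

Theorem theorem1 (M : market) (ka kp : R) :
  valid_market M ->
  0 < ka <= 1 -> 0 < kp <= 1 ->
  eta M < / (ka * rpow (Phimax M) (1 - theta M)) ->
  (* (i) opt-saturated case: R'(p0) < 0; vary kappa_peak *)
  (Rprime_at_p0 M ka kp (fun d => d < 0) ->
     (forall p, is_eq_price M ka kp p <-> p = pstar M ka kp) /\
     Apeak M kp (pstar M ka kp) = C3g M /\
     (exists dp, 0 < dp /\
        derivable_pt_lim (fun k => pstar M ka k) kp dp /\
        (forall Phi, derivable_pt_lim (fun k => net_utility M Phi (pstar M ka k)) kp (- dp))) /\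
     (exists dr, dr < 0 /\ derivable_pt_lim (fun k => Rev M ka (pstar M ka k)) kp dr) /\
     (exists du, du < 0 /\ derivable_pt_lim (fun k => surplus M (pstar M ka k)) kp du) /\
     (exists dw, dw < 0 /\ derivable_pt_lim (fun k => welfare M ka (pstar M ka k)) kp dw)) /\
  (* (ii) opt-unsaturated case: R'(p0) > 0; vary kappa_avg *)
  (Rprime_at_p0 M ka kp (fun d => 0 < d) ->
     (forall p, is_eq_price M ka kp p <-> p = pstar M ka kp) /\
     Apeak M kp (pstar M ka kp) <> C3g M /\
     (exists dp, 0 < dp /\
        derivable_pt_lim (fun k => pstar M k kp) ka dp /\
        (forall Phi, derivable_pt_lim (fun k => net_utility M Phi (pstar M k kp)) ka (- dp))) /\
     (exists dr, dr < 0 /\ derivable_pt_lim (fun k => Rev M k (pstar M k kp)) ka dr) /\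
     (exists du, du < 0 /\ derivable_pt_lim (fun k => surplus M (pstar M k kp)) ka du) /\
     (exists dw, dw < 0 /\ derivable_pt_lim (fun k => welfare M k (pstar M k kp)) ka dw)).
Proof.
  intros hv [hka _] [hkp _] heta.
  pose proof (eta_hyp M ka hv hka heta) as hphiM.
  split.
  - intros hR. apply part_i; auto.
  - intros hR. apply part_ii; auto.
Qed.
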